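(* Let $k$ be a field of characteristic different from $2$, $d\in k$, and $E\subset\mathbb{P}^3$ the elliptic curve $X_0^2+dX_3^2=X_1^2+X_2^2$, $X_0X_3=X_1X_2$, with identity $(1:0:1:0)$. Let $\mathscr{K}_2=E^2/\{\pm1\}$ be modelled in $\mathbb{P}^3\times\mathbb{P}^1$, with coordinates $\big((U_0:U_1:U_2:U_3),(Z_0:Z_1)\big)$, as the variety cut out by $U_0U_3=U_1U_2$ and $(U_0^2-U_1^2-U_2^2+U_3^2)Z_0^2=(U_0^2-dU_1^2-dU_2^2+d^2U_3^2)Z_1^2$, via the projection $(P,Q)\mapsto\big((X_0Y_0:X_2Y_0:X_0Y_2:X_2Y_2),(X_0Y_0:X_1Y_1)\big)$ for $(P,Q)=\big((X_0:X_1:X_2:X_3),(Y_0:Y_1:Y_2:Y_3)\big)$. Let $\tau:\mathscr{K}_2\to\mathscr{K}_2$ be the endomorphism induced by $\tau(P,Q)=(P+Q,Q)$ on $E^2$. Then $$\pi_1\circ\tau=(U_0Z_0-dU_3Z_1\;:\;-U_0Z_1+U_3Z_0),\qquad \pi_2\circ\tau=(U_0:U_2)=(U_1:U_3),$$ and $\pi_3\circ\tau$ is given by either of the equivalent expressions $$\big((U_0^2-dU_3^2)Z_0\;:\;(U_0U_1-U_2U_3)Z_0+(U_0U_2-dU_1U_3)Z_1\big),$$ $$\big(-(U_0U_2-U_1U_3)Z_0+(U_0U_1-dU_2U_3)Z_1\;:\;(U_1^2-U_2^2)Z_1\big).$$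
   Context: $\mathscr{K}_1=E/\{\pm1\}\cong\mathbb{P}^1$ via $(X_0:X_1:X_2:X_3)\mapsto(X_0:X_2)$; $-1$ acts diagonally on $E^2$. The projections $\pi_1,\pi_2:\mathscr{K}_2\to\mathscr{K}_1$ and $\pi_3:\mathscr{K}_2\to\mathbb{P}^1$ are $\pi_1=(U_0:U_1)=(U_2:U_3)$, $\pi_2=(U_0:U_2)=(U_1:U_3)$, $\pi_3=(Z_0:Z_1)$. ''Given by'' a polynomial expression means the morphism equals the displayed tuple wherever its components do not all vanish on $\mathscr{K}_2$. *)

(* Defs.v *)
From HB Require Import structures.
From mathcomp Require Import all_boot all_order all_algebra.
Set Implicit Arguments. Unset Strict Implicit. Unset Printing Implicit Defensive.
Import Order.TTheory GRing.Theory Num.Theory.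
Local Open Scope ring_scope.

(* Homogeneous coordinates of a point of P^3 (resp. P^1) over a field k. *)
Record pt4 (k : Type) := Pt4 { c0 : k; c1 : k; c2 : k; c3 : k }.

(* propositional list membership (pt4 k is not an eqType) *)
Definition inL {T : Type} (x : T) (s : seq T) : Prop :=
  foldr (fun y P => y = x \/ P) False s.

Section Defs.
Variable k : fieldType.

Definition nz4 (X : pt4 k) : Prop :=
  ~ [/\ c0 X = 0, c1 X = 0, c2 X = 0 & c3 X = 0].
Definition nz2 (a : k * k) : Prop := ~ (a.1 = 0 /\ a.2 = 0).

(* proportionality of two vectors (equality in P^1 / P^3 when both nonzero) *)
Definition prop2 (a b : k * k) : Prop := a.1 * b.2 = a.2 * b.1.
Definition prop4 (U V : pt4 k) : Prop :=
  [/\ c0 U * c1 V = c1 U * c0 V, c0 U * c2 V = c2 U * c0 V,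
      c0 U * c3 V = c3 U * c0 V, c1 U * c2 V = c2 U * c1 V
    & c1 U * c3 V = c3 U * c1 V /\ c2 U * c3 V = c3 U * c2 V].

Definition onE (d : k) (X : pt4 k) : Prop :=
  [/\ nz4 X,
      c0 X ^+ 2 + d * c3 X ^+ 2 = c1 X ^+ 2 + c2 X ^+ 2
    & c0 X * c3 X = c1 X * c2 X].

(* E sits in the Segre quadric P^1 x P^1 via X = (a0 b0 : a1 b0 : a0 b1 : a1 b1),
   where (a0 : a1) = (X0 : X1) = (X2 : X3) and (b0 : b1) = (X0 : X2) = (X1 : X3)
   (affinely x = X1/X0, y = X2/X0, the Edwards curve x^2+y^2 = 1 + d x^2 y^2
   with identity (0,1) = (1:0:1:0)).  "X has first factor a" / "second factor b": *)
Definition fac1_is (X : pt4 k) (a : k * k) : Prop :=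
  c0 X * a.2 = c1 X * a.1 /\ c2 X * a.2 = c3 X * a.1.
Definition fac2_is (X : pt4 k) (b : k * k) : Prop :=
  c0 X * b.2 = c2 X * b.1 /\ c1 X * b.2 = c3 X * b.1.

(* Group law on E (identity (1:0:1:0)): the Edwards addition laws, written as
   the two (complete) systems of bidegree-(1,1) forms for each P^1 factor. *)
Definition addA (d : k) (X Y : pt4 k) : seq (k * k) :=
  [:: (c0 X * c0 Y + d * c3 X * c3 Y, c1 X * c2 Y + c2 X * c1 Y);
      (c1 X * c1 Y + c2 X * c2 Y, c0 X * c3 Y + c3 X * c0 Y)].
Definition addB (d : k) (X Y : pt4 k) : seq (k * k) :=
  [:: (c0 X * c0 Y - d * c3 X * c3 Y, c2 X * c2 Y - c1 X * c1 Y);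
      (c1 X * c2 Y - c2 X * c1 Y, c3 X * c0 Y - c0 X * c3 Y)].

Definition is_sum (d : k) (P Q R : pt4 k) : Prop :=
  [/\ onE d R,
      (forall a, inL a (addA d P Q) -> nz2 a -> fac1_is R a)
    & (forall b, inL b (addB d P Q) -> nz2 b -> fac2_is R b)].

(* The projection E^2 -> K_2 subset P^3 x P^1,
   (P,Q) |-> ((X0Y0 : X2Y0 : X0Y2 : X2Y2), (X0Y0 : X1Y1)),
   extended by the equivalent expressions obtained from (X0:X2) = (X1:X3)
   and X1/X0 = X3/X2 on E.  ((U,Z) is the image of (P,Q); the map is
   defined at (P,Q) iff one of the Z-expressions is nonzero.) *)
Definition segre (a b : k * k) : pt4 k :=
  Pt4 (a.1 * b.1) (a.2 * b.1) (a.1 * b.2) (a.2 * b.2).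
Definition kumU (X Y : pt4 k) : seq (pt4 k) :=
  [seq segre a b | a <- [:: (c0 X, c2 X); (c1 X, c3 X)],
                   b <- [:: (c0 Y, c2 Y); (c1 Y, c3 Y)]].
Definition kumZ (X Y : pt4 k) : seq (k * k) :=
  [:: (c0 X * c0 Y, c1 X * c1 Y); (c0 X * c2 Y, c1 X * c3 Y);
      (c2 X * c0 Y, c3 X * c1 Y); (c2 X * c2 Y, c3 X * c3 Y)].

Definition kummer_img (X Y : pt4 k) (U : pt4 k) (Z : k * k) : Prop :=
  [/\ nz4 U, nz2 Z,
      (forall V, inL V (kumU X Y) -> nz4 V -> prop4 U V),
      (exists2 z, inL z (kumZ X Y) & nz2 z)
    & (forall z, inL z (kumZ X Y) -> nz2 z -> prop2 Z z)].

Definition pi1_is (U : pt4 k) (t : k * k) : Prop :=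
  prop2 (c0 U, c1 U) t /\ prop2 (c2 U, c3 U) t.
Definition pi2_is (U : pt4 k) (t : k * k) : Prop :=
  prop2 (c0 U, c2 U) t /\ prop2 (c1 U, c3 U) t.
Definition pi3_is (Z : k * k) (t : k * k) : Prop := prop2 Z t.

End Defs.

(* Main.v *)
Require Import Defs.
From HB Require Import structures.
From mathcomp Require Import all_boot all_order all_algebra.
From mathcomp Require Import ring.
Import Order.TTheory GRing.Theory Num.Theory.
Local Open Scope ring_scope.

Definition scale4 {k : fieldType} (l : k) (W : pt4 k) : pt4 k :=
  Pt4 (l * c0 W) (l * c1 W) (l * c2 W) (l * c3 W).

Definition Fa {k : fieldType} (d : k) (U : pt4 k) (Z : k * k) : k * k :=
  ((c0 U ^+ 2 - d * c3 U ^+ 2) * Z.1,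
   (c0 U * c1 U - c2 U * c3 U) * Z.1 + (c0 U * c2 U - d * c1 U * c3 U) * Z.2).
Definition Fb {k : fieldType} (d : k) (U : pt4 k) (Z : k * k) : k * k :=
  (- (c0 U * c2 U - c1 U * c3 U) * Z.1 + (c0 U * c1 U - d * c2 U * c3 U) * Z.2,
   (c1 U ^+ 2 - c2 U ^+ 2) * Z.2).
Definition tf {k : fieldType} (d : k) (U : pt4 k) (Z : k * k) : k * k :=
  (c0 U * Z.1 - d * c3 U * Z.2, - c0 U * Z.2 + c3 U * Z.1).

Definition fw {k : fieldType} (H : k -> pt4 k -> k * k -> k * k)
  (d a0 a1 b0 b1 e0 e1 g0 g1 : k) := H d (segre (b0, b1) (g0, g1)) (a0 * e0, a1 * e1).
Definition Pf {k : fieldType} (d a0 a1 b0 b1 e0 e1 g0 g1 : k) :=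
  (a0*b0)^+2 + d*(a1*b1)^+2 - ((a1*b0)^+2 + (a0*b1)^+2).
Definition Qf {k : fieldType} (d a0 a1 b0 b1 e0 e1 g0 g1 : k) :=
  (e0*g0)^+2 + d*(e1*g1)^+2 - ((e1*g0)^+2 + (e0*g1)^+2).
Definition A0f {k : fieldType} (d a0 a1 b0 b1 e0 e1 g0 g1 : k) :=
  a0*b0*(e0*g0) + d*(a1*b1)*(e1*g1).
Definition A1f {k : fieldType} (d a0 a1 b0 b1 e0 e1 g0 g1 : k) :=
  a1*b0*(e0*g1) + a0*b1*(e1*g0).
Definition B0f {k : fieldType} (d a0 a1 b0 b1 e0 e1 g0 g1 : k) :=
  a1*b0*(e1*g0) + a0*b1*(e0*g1).
Definition B1f {k : fieldType} (d a0 a1 b0 b1 e0 e1 g0 g1 : k) :=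
  a0*b0*(e1*g1) + a1*b1*(e0*g0).

Lemma Fa_A {k : fieldType} {d a0 a1 b0 b1 e0 e1 g0 g1 : k} :
  Pf d a0 a1 b0 b1 e0 e1 g0 g1 = 0 -> Qf d a0 a1 b0 b1 e0 e1 g0 g1 = 0 ->
  A0f d a0 a1 b0 b1 e0 e1 g0 g1 * (e0 * (fw Fa d a0 a1 b0 b1 e0 e1 g0 g1).2) = A1f d a0 a1 b0 b1 e0 e1 g0 g1 * (e1 * (fw Fa d a0 a1 b0 b1 e0 e1 g0 g1).1).
Proof.
move=> hP hQ; apply/eqP; rewrite -subr_eq0; apply/eqP.
transitivity (((-1)*b1*e0*e1^+2*g0^+3 + (-1)*b1*e0^+3*g0*g1^+2 + b1*e0^+3*g0^+3) * (Pf d a0 a1 b0 b1 e0 e1 g0 g1) + ((-1)*a1^+2*b1^+3*e0*g0*d + a1^+2*b0^+2*b1*e0*g0 + a0^+2*b1^+3*e0*g0) * (Qf d a0 a1 b0 b1 e0 e1 g0 g1)); last by rewrite hP hQ; ring.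
by rewrite /Pf /Qf /A0f /A1f /fw /Fa /=; ring.
Qed.

Lemma Fa_A2 {k : fieldType} {d a0 a1 b0 b1 e0 e1 g0 g1 : k} :
  Pf d a0 a1 b0 b1 e0 e1 g0 g1 = 0 -> Qf d a0 a1 b0 b1 e0 e1 g0 g1 = 0 ->
  B0f d a0 a1 b0 b1 e0 e1 g0 g1 * (e0 * (fw Fa d a0 a1 b0 b1 e0 e1 g0 g1).2) = B1f d a0 a1 b0 b1 e0 e1 g0 g1 * (e1 * (fw Fa d a0 a1 b0 b1 e0 e1 g0 g1).1).
Proof.
move=> hP hQ; apply/eqP; rewrite -subr_eq0; apply/eqP.
transitivity (((-1)*b0*e0*e1^+2*g0^+2*g1) * (Pf d a0 a1 b0 b1 e0 e1 g0 g1) + (a0^+2*b0*b1^+2*e0*g1) * (Qf d a0 a1 b0 b1 e0 e1 g0 g1)); last by rewrite hP hQ; ring.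
by rewrite /Pf /Qf /B0f /B1f /fw /Fa /=; ring.
Qed.

Lemma Fa_van0 {k : fieldType} {d a0 a1 b0 b1 e0 e1 g0 g1 : k} :
  Qf d a0 a1 b0 b1 e0 e1 g0 g1 = 0 -> A0f d a0 a1 b0 b1 e0 e1 g0 g1 = 0 -> A1f d a0 a1 b0 b1 e0 e1 g0 g1 = 0 -> B0f d a0 a1 b0 b1 e0 e1 g0 g1 = 0 -> B1f d a0 a1 b0 b1 e0 e1 g0 g1 = 0 ->
  [/\ (fw Fa d a0 a1 b0 b1 e0 e1 g0 g1).1 * e0 = 0, (fw Fa d a0 a1 b0 b1 e0 e1 g0 g1).1 * e1 = 0, (fw Fa d a0 a1 b0 b1 e0 e1 g0 g1).2 * e0 = 0
     & (fw Fa d a0 a1 b0 b1 e0 e1 g0 g1).2 * (d * e1 ^+ 4 ) = 0].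
Proof.
move=> hQ h0 h1 h2 h3; split.
- transitivity ((b0*e0*g0) * (A0f d a0 a1 b0 b1 e0 e1 g0 g1) + ((-1)*b1*e0*g1*d) * (B0f d a0 a1 b0 b1 e0 e1 g0 g1)); last by rewrite ?hQ ?h0 ?h1 ?h2 ?h3; ring.
  by rewrite /Qf /A0f /A1f /B0f /B1f /fw /Fa /=; ring.
- transitivity ((b0*e1*g0) * (A0f d a0 a1 b0 b1 e0 e1 g0 g1) + ((-1)*b1*e1*g1*d) * (B0f d a0 a1 b0 b1 e0 e1 g0 g1)); last by rewrite ?hQ ?h0 ?h1 ?h2 ?h3; ring.
  by rewrite /Qf /A0f /A1f /B0f /B1f /fw /Fa /=; ring.
- transitivity ((b0*e1*g0) * (A1f d a0 a1 b0 b1 e0 e1 g0 g1) + ((-1)*b1*e1*g1*d) * (B1f d a0 a1 b0 b1 e0 e1 g0 g1) + (a0*b0*b1) * (Qf d a0 a1 b0 b1 e0 e1 g0 g1)); last by rewrite ?hQ ?h0 ?h1 ?h2 ?h3; ring.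
  by rewrite /Qf /A0f /A1f /B0f /B1f /fw /Fa /=; ring.
- transitivity (((-1)*b1*e1^+4*g0*d + (2)*b1*e0^+2*e1^+2*g0 + (-1)*b1*e0^+4*g0) * (A0f d a0 a1 b0 b1 e0 e1 g0 g1) + ((2)*b0*e0*e1^+3*g0*d + (-1)*b0*e0^+3*e1*g0) * (A1f d a0 a1 b0 b1 e0 e1 g0 g1) + (b0*e1^+4*g1*d + (-2)*b0*e0^+2*e1^+2*g1*d + b0*e0^+4*g1) * (B0f d a0 a1 b0 b1 e0 e1 g0 g1) + ((-2)*b1*e0*e1^+3*g1*d + b1*e0^+3*e1*g1*d) * (B1f d a0 a1 b0 b1 e0 e1 g0 g1) + (a0*b0*b1*e0^+3) * (Qf d a0 a1 b0 b1 e0 e1 g0 g1)); last by rewrite ?hQ ?h0 ?h1 ?h2 ?h3; ring.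
  by rewrite /Qf /A0f /A1f /B0f /B1f /fw /Fa /=; ring.
Qed.

Lemma Fb_A {k : fieldType} {d a0 a1 b0 b1 e0 e1 g0 g1 : k} :
  Pf d a0 a1 b0 b1 e0 e1 g0 g1 = 0 -> Qf d a0 a1 b0 b1 e0 e1 g0 g1 = 0 ->
  A0f d a0 a1 b0 b1 e0 e1 g0 g1 * (e0 * (fw Fb d a0 a1 b0 b1 e0 e1 g0 g1).2) = A1f d a0 a1 b0 b1 e0 e1 g0 g1 * (e1 * (fw Fb d a0 a1 b0 b1 e0 e1 g0 g1).1).
Proof.
move=> hP hQ; apply/eqP; rewrite -subr_eq0; apply/eqP.
transitivity ((b1*e0*e1^+2*g0^+2*g1) * (Pf d a0 a1 b0 b1 e0 e1 g0 g1) + (a0*a1*b0*b1^+2*e1*g0) * (Qf d a0 a1 b0 b1 e0 e1 g0 g1)); last by rewrite hP hQ; ring.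
by rewrite /Pf /Qf /A0f /A1f /fw /Fb /=; ring.
Qed.

Lemma Fb_A2 {k : fieldType} {d a0 a1 b0 b1 e0 e1 g0 g1 : k} :
  Pf d a0 a1 b0 b1 e0 e1 g0 g1 = 0 -> Qf d a0 a1 b0 b1 e0 e1 g0 g1 = 0 ->
  B0f d a0 a1 b0 b1 e0 e1 g0 g1 * (e0 * (fw Fb d a0 a1 b0 b1 e0 e1 g0 g1).2) = B1f d a0 a1 b0 b1 e0 e1 g0 g1 * (e1 * (fw Fb d a0 a1 b0 b1 e0 e1 g0 g1).1).
Proof.
move=> hP hQ; apply/eqP; rewrite -subr_eq0; apply/eqP.
transitivity ((b0*e0*e1^+2*g0*g1^+2) * (Pf d a0 a1 b0 b1 e0 e1 g0 g1) + (a0*a1*b0^+2*b1*e1*g1) * (Qf d a0 a1 b0 b1 e0 e1 g0 g1)); last by rewrite hP hQ; ring.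
by rewrite /Pf /Qf /B0f /B1f /fw /Fb /=; ring.
Qed.

Lemma Fb_van0 {k : fieldType} {d a0 a1 b0 b1 e0 e1 g0 g1 : k} :
  Qf d a0 a1 b0 b1 e0 e1 g0 g1 = 0 -> A0f d a0 a1 b0 b1 e0 e1 g0 g1 = 0 -> A1f d a0 a1 b0 b1 e0 e1 g0 g1 = 0 -> B0f d a0 a1 b0 b1 e0 e1 g0 g1 = 0 -> B1f d a0 a1 b0 b1 e0 e1 g0 g1 = 0 ->
  [/\ (fw Fb d a0 a1 b0 b1 e0 e1 g0 g1).1 * e0 = 0, (fw Fb d a0 a1 b0 b1 e0 e1 g0 g1).1 * e1 = 0, (fw Fb d a0 a1 b0 b1 e0 e1 g0 g1).2 * e0 = 0
     & (fw Fb d a0 a1 b0 b1 e0 e1 g0 g1).2 * (d * e1 ^+ 4 * g0) = 0].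
Proof.
move=> hQ h0 h1 h2 h3; split.
- transitivity (((-1)*b0*e0*g1) * (A0f d a0 a1 b0 b1 e0 e1 g0 g1) + (b1*e0*g0) * (B0f d a0 a1 b0 b1 e0 e1 g0 g1)); last by rewrite ?hQ ?h0 ?h1 ?h2 ?h3; ring.
  by rewrite /Qf /A0f /A1f /B0f /B1f /fw /Fb /=; ring.
- transitivity (((-1)*b0*e1*g1) * (A0f d a0 a1 b0 b1 e0 e1 g0 g1) + (b1*e1*g0) * (B0f d a0 a1 b0 b1 e0 e1 g0 g1)); last by rewrite ?hQ ?h0 ?h1 ?h2 ?h3; ring.
  by rewrite /Qf /A0f /A1f /B0f /B1f /fw /Fb /=; ring.
- transitivity (((-1)*b0*e1*g1) * (A1f d a0 a1 b0 b1 e0 e1 g0 g1) + (b1*e1*g0) * (B1f d a0 a1 b0 b1 e0 e1 g0 g1)); last by rewrite ?hQ ?h0 ?h1 ?h2 ?h3; ring.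
  by rewrite /Qf /A0f /A1f /B0f /B1f /fw /Fb /=; ring.
- transitivity ((b1*e1^+4*g0*g1*d + (-2)*b1*e0^+2*e1^+2*g0*g1 + b1*e0^+4*g0*g1) * (A0f d a0 a1 b0 b1 e0 e1 g0 g1) + ((-2)*b0*e0*e1^+3*g0*g1*d + b0*e0^+3*e1*g0*g1) * (A1f d a0 a1 b0 b1 e0 e1 g0 g1) + ((-1)*b0*e1^+4*g1^+2*d + b0*e0^+2*e1^+2*g1^+2*d + b0*e0^+2*e1^+2*g0^+2 + (-1)*b0*e0^+4*g0^+2) * (B0f d a0 a1 b0 b1 e0 e1 g0 g1) + (b1*e0*e1^+3*g1^+2*d + b1*e0*e1^+3*g0^+2*d + (-1)*b1*e0^+3*e1*g1^+2*d) * (B1f d a0 a1 b0 b1 e0 e1 g0 g1) + ((-1)*a1*b1^+2*e1^+3*g0*d + a1*b0^+2*e0^+2*e1*g0) * (Qf d a0 a1 b0 b1 e0 e1 g0 g1)); last by rewrite ?hQ ?h0 ?h1 ?h2 ?h3; ring.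
  by rewrite /Qf /A0f /A1f /B0f /B1f /fw /Fb /=; ring.
Qed.

Lemma div_lem {k : fieldType} (x y um un : k) :
  x != 0 -> um * y = un * x -> un = um / x * y.
Proof. by move=> nx H; rewrite mulrAC H mulfK. Qed.

Lemma prop4_lin1 {k : fieldType} {U V : pt4 k} :
  nz4 V -> prop4 U V -> exists l, U = scale4 l V.
Proof.
case: U => u0 u1 u2 u3; case: V => v0 v1 v2 v3.
rewrite /nz4 /prop4 /scale4 /= => nz [h01 h02 h03 h12 [h13 h23]].
have [z0|n0] := eqVneq v0 0; last first.
  by exists (u0 / v0); congr Pt4; apply: div_lem n0 _ => //; symmetry.
have [z1|n1] := eqVneq v1 0; last first.
  by exists (u1 / v1); congr Pt4; apply: div_lem n1 _ => //; symmetry.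
have [z2|n2] := eqVneq v2 0; last first.
  by exists (u2 / v2); congr Pt4; apply: div_lem n2 _ => //; symmetry.
have [z3|n3] := eqVneq v3 0; last first.
  by exists (u3 / v3); congr Pt4; apply: div_lem n3 _ => //; symmetry.
by case: nz; split.
Qed.

Lemma prop2_lin1 {k : fieldType} {Z w : k * k} :
  nz2 w -> prop2 Z w -> exists l, Z = (l * w.1, l * w.2).
Proof.
case: Z => z0 z1; case: w => w0 w1; rewrite /nz2 /prop2 /= => nz h.
have [e0|n0] := eqVneq w0 0; last first.
  by exists (z0 / w0); congr pair; apply: div_lem n0 _ => //; symmetry.
have [e1|n1] := eqVneq w1 0; last first.
  by exists (z1 / w1); congr pair; apply: div_lem n1 _ => //; symmetry.
by case: nz; split.
Qed.

Lemma nz2_dec {k : fieldType} (x y : k) : nz2 (x, y) \/ (x = 0 /\ y = 0).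
Proof.
have [->|nx] := eqVneq x 0; last by left; case=> /= hx _; move: nx; rewrite hx eqxx.
have [->|ny] := eqVneq y 0; first by right.
by left; case=> /= _ hy; move: ny; rewrite hy eqxx.
Qed.

Lemma nz2_cases {k : fieldType} {x y : k} : nz2 (x, y) -> x != 0 \/ (x = 0 /\ y != 0).
Proof.
move=> nz; have [hx|nx] := eqVneq x 0; last by left.
right; split => //; apply/eqP => hy; exact: nz.
Qed.

Lemma nz2_scale {k : fieldType} {c x y : k} : nz2 (c * x, c * y) -> nz2 (x, y).
Proof. by move=> nz [/= hx hy]; apply: nz; rewrite /= hx hy !mulr0. Qed.

Lemma nz4_scale {k : fieldType} (c : k) W : c != 0 -> nz4 W -> nz4 (scale4 c W).
Proof.
move=> nc nW [/= h0 h1 h2 h3]; apply: nW.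
by split; apply: (mulfI nc); rewrite mulr0.
Qed.

Lemma nz4_segre {k : fieldType} (b0 b1 g0 g1 : k) :
  nz2 (b0, b1) -> nz2 (g0, g1) -> nz4 (segre (b0, b1) (g0, g1)).
Proof.
move=> nb ng [/= h0 h1 h2 h3]; apply: ng => /=.
case: (nz2_cases nb) => [n0 | [_ n1]].
  by split; apply: (mulfI n0); rewrite mulr0.
by split; apply: (mulfI n1); rewrite mulr0.
Qed.

Lemma param {k : fieldType} {d : k} {X : pt4 k} :
  onE d X -> exists a0 a1 b0 b1, [/\ nz2 (a0, a1), nz2 (b0, b1) & X = segre (a0, a1) (b0, b1)].
Proof.
case: X => x0 x1 x2 x3 [nz _ /= h]; rewrite /segre /=.
have [z0|n0] := eqVneq x0 0; last first.
  exists x0, x1, 1, (x2 / x0); split => //.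
    by case=> /= h0; move: n0; rewrite h0 eqxx.
    by case=> /eqP; rewrite oner_eq0.
  congr Pt4; rewrite ?mulr1 //; first by field.
  by apply: (mulfI n0); rewrite h; field.
have [z1|m1] := eqVneq x1 0; last first.
  exists x0, x1, 1, (x3 / x1); split => //.
    by case=> /= _ h1; move: m1; rewrite h1 eqxx.
    by case=> /eqP; rewrite oner_eq0.
  congr Pt4; rewrite ?mulr1 //; last by field.
  by apply: (mulfI m1); rewrite -h; field.
have [z2|m2] := eqVneq x2 0; last first.
  exists x2, x3, (x0 / x2), 1; split => //.
    by case=> /= h2; move: m2; rewrite h2 eqxx.
    by case=> _ /eqP; rewrite oner_eq0.
  congr Pt4; rewrite ?mulr1 //; first by field.
  by apply: (mulfI m2); rewrite mulrC -h; field.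
have [z3|m3] := eqVneq x3 0; last first.
  exists x2, x3, (x1 / x3), 1; split => //.
    by case=> /= _ h3; move: m3; rewrite h3 eqxx.
    by case=> _ /eqP; rewrite oner_eq0.
  congr Pt4; rewrite ?mulr1 //; last by field.
  by apply: (mulfI m3); rewrite mulrC h; field.
by case: nz; split.
Qed.

Lemma kumU_lin {k : fieldType} {a0 a1 b0 b1 e0 e1 g0 g1 : k} {U : pt4 k} :
  nz2 (a0, a1) -> nz2 (b0, b1) -> nz2 (e0, e1) -> nz2 (g0, g1) ->
  (forall V, inL V (kumU (segre (a0, a1) (b0, b1)) (segre (e0, e1) (g0, g1))) ->
     nz4 V -> prop4 U V) ->
  exists l, U = scale4 l (segre (b0, b1) (g0, g1)).
Proof.
move=> na nb ne ng H.
suff [c [V [hV nc eV]]] : exists (c : k) (V : pt4 k),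
  [/\ inL V (kumU (segre (a0, a1) (b0, b1)) (segre (e0, e1) (g0, g1))), c != 0
    & V = scale4 c (segre (b0, b1) (g0, g1))].
  have nzV : nz4 V by rewrite eV; apply: nz4_scale => //; apply: nz4_segre.
  have [l ->] := prop4_lin1 nzV (H V hV nzV).
  by exists (l * c); rewrite eV /scale4 /=; congr Pt4; ring.
have [a0n|[_ a1n]] := nz2_cases na; have [e0n|[_ e1n]] := nz2_cases ne.
- exists (a0 * e0), (segre (a0 * b0, a0 * b1) (e0 * g0, e0 * g1)); split.
  + by rewrite /kumU /inL /=; left.
  + by rewrite mulf_neq0.
  + by rewrite /scale4 /segre /=; congr Pt4; ring.
- exists (a0 * e1), (segre (a0 * b0, a0 * b1) (e1 * g0, e1 * g1)); split.
  + by rewrite /kumU /inL /=; right; left.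
  + by rewrite mulf_neq0.
  + by rewrite /scale4 /segre /=; congr Pt4; ring.
- exists (a1 * e0), (segre (a1 * b0, a1 * b1) (e0 * g0, e0 * g1)); split.
  + by rewrite /kumU /inL /=; right; right; left.
  + by rewrite mulf_neq0.
  + by rewrite /scale4 /segre /=; congr Pt4; ring.
- exists (a1 * e1), (segre (a1 * b0, a1 * b1) (e1 * g0, e1 * g1)); split.
  + by rewrite /kumU /inL /=; right; right; right; left.
  + by rewrite mulf_neq0.
  + by rewrite /scale4 /segre /=; congr Pt4; ring.
Qed.

Lemma kumZ_lin {k : fieldType} {a0 a1 b0 b1 e0 e1 g0 g1 : k} {Z : k * k} :
  (exists2 z, inL z (kumZ (segre (a0, a1) (b0, b1)) (segre (e0, e1) (g0, g1))) & nz2 z) ->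
  (forall z, inL z (kumZ (segre (a0, a1) (b0, b1)) (segre (e0, e1) (g0, g1))) ->
     nz2 z -> prop2 Z z) ->
  exists n, Z = (n * (a0 * e0), n * (a1 * e1)).
Proof.
case=> z hz nz H.
have [c ez] : exists c, z = (c * (a0 * e0), c * (a1 * e1)).
  move: hz; rewrite /kumZ /inL /=.
  case=> [<-|[<-|[<-|[<-|[]]]]].
  - by exists (b0 * g0); congr pair; ring.
  - by exists (b0 * g1); congr pair; ring.
  - by exists (b1 * g0); congr pair; ring.
  - by exists (b1 * g1); congr pair; ring.
have [l ->] := prop2_lin1 nz (H z hz nz).
by exists (l * c); rewrite ez /=; congr pair; ring.
Qed.

Lemma fac1_seg {k : fieldType} {r0 r1 s0 s1 : k} {A : k * k} :
  nz2 (s0, s1) -> fac1_is (segre (r0, r1) (s0, s1)) A -> r0 * A.2 = r1 * A.1.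
Proof.
rewrite /fac1_is /= => ns [h1 h2].
have [n0|[_ n1]] := nz2_cases ns.
  by apply: (mulIf n0); rewrite mulrAC h1 mulrAC.
by apply: (mulIf n1); rewrite mulrAC h2 mulrAC.
Qed.

Lemma fac2_seg {k : fieldType} {r0 r1 s0 s1 : k} {B : k * k} :
  nz2 (r0, r1) -> fac2_is (segre (r0, r1) (s0, s1)) B -> s0 * B.2 = s1 * B.1.
Proof.
rewrite /fac2_is /= => nr [h1 h2].
have [n0|[_ n1]] := nz2_cases nr.
  by apply: (mulfI n0); rewrite !mulrA.
by apply: (mulfI n1); rewrite !mulrA.
Qed.

Lemma cancel_lem {k : fieldType} {r0 r1 A1 A2 x y : k} :
  r0 * A2 = r1 * A1 -> A1 * x = A2 * y -> nz2 (A1, A2) -> r0 * x = r1 * y.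
Proof.
move=> hr hA nA; have [n1|[z1 n2]] := nz2_cases nA.
  by apply: (mulfI n1); rewrite mulrCA hA mulrA hr; ring.
move: hr hA; rewrite z1 mulr0 mul0r => /eqP; rewrite mulf_eq0 (negbTE n2) orbF.
move=> /eqP -> /esym /eqP; rewrite mulf_eq0 (negbTE n2) /= => /eqP ->.
by rewrite !mul0r mulr0.
Qed.

Lemma lin_eq {k : fieldType} (K : k) {x y l r : k} : x = y -> l = K * x -> r = K * y -> l = r.
Proof. by move=> -> -> ->. Qed.

Lemma van_lem {k : fieldType} {x e0 e1 : k} :
  nz2 (e0, e1) -> x * e0 = 0 -> x * e1 = 0 -> x = 0.
Proof.
move=> ne h0 h1; have [n0|[_ n1]] := nz2_cases ne.
  by apply: (mulIf n0); rewrite mul0r.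
by apply: (mulIf n1); rewrite mul0r.
Qed.

Lemma nz2_m {k : fieldType} {e0 e1 m : k} :
  nz2 (e0, e1) -> (e0 = 0 -> m != 0) -> nz2 (e0, m).
Proof. by move=> ne hm [/= h0 hm0]; move: (hm h0); rewrite hm0 eqxx. Qed.

Lemma e1_nz {k : fieldType} {e0 e1 : k} : nz2 (e0, e1) -> e0 = 0 -> e1 != 0.
Proof. by move=> ne z; apply/eqP => z1; apply: ne. Qed.

Lemma g0_nz {k : fieldType} {d a0 a1 b0 b1 e0 e1 g0 g1 : k} :
  d != 0 -> Qf d a0 a1 b0 b1 e0 e1 g0 g1 = 0 -> e0 = 0 ->
  nz2 (e0, e1) -> nz2 (g0, g1) -> g0 != 0.
Proof.
move=> hd hQ z ne ng; apply/eqP => z0.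
have e1n := e1_nz ne z.
apply: ng; split => //=.
have : d * e1 ^+ 2 * g1 ^+ 2 = 0 by rewrite -hQ /Qf z z0; ring.
by move=> /eqP; rewrite !mulf_eq0 (negbTE hd) (negbTE e1n) /= ?orbb => /eqP.
Qed.

Theorem theorem6p2 (k : fieldType) (d : k) :
  (2%:R : k) != 0 -> d != 0 -> d != 1 ->
  forall (P Q R U U' : pt4 k) (Z Z' : k * k),
    onE d P -> onE d Q -> is_sum d P Q R ->
    kummer_img P Q U Z -> kummer_img R Q U' Z' ->
    let U0 := c0 U in let U1 := c1 U in let U2 := c2 U in let U3 := c3 U in
    let Z0 := Z.1 in let Z1 := Z.2 in
    (* pi_1 o tau *)
    (nz2 (U0 * Z0 - d * U3 * Z1, - U0 * Z1 + U3 * Z0) ->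
       pi1_is U' (U0 * Z0 - d * U3 * Z1, - U0 * Z1 + U3 * Z0))
    (* pi_2 o tau *)
    /\ (nz2 (U0, U2) -> pi2_is U' (U0, U2))
    /\ (nz2 (U1, U3) -> pi2_is U' (U1, U3))
    (* pi_3 o tau, first expression *)
    /\ (nz2 ((U0 ^+ 2 - d * U3 ^+ 2) * Z0,
             (U0 * U1 - U2 * U3) * Z0 + (U0 * U2 - d * U1 * U3) * Z1) ->
        pi3_is Z' ((U0 ^+ 2 - d * U3 ^+ 2) * Z0,
                   (U0 * U1 - U2 * U3) * Z0 + (U0 * U2 - d * U1 * U3) * Z1))
    (* pi_3 o tau, second expression *)
    /\ (nz2 (- (U0 * U2 - U1 * U3) * Z0 + (U0 * U1 - d * U2 * U3) * Z1,
             (U1 ^+ 2 - U2 ^+ 2) * Z1) ->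
        pi3_is Z' (- (U0 * U2 - U1 * U3) * Z0 + (U0 * U1 - d * U2 * U3) * Z1,
                   (U1 ^+ 2 - U2 ^+ 2) * Z1)).
Proof.
move=> h2 hd0 hd1 P Q R U U' Z Z' hP hQ hS hK hK'.
have [a0 [a1 [b0 [b1 [na nb eP]]]]] := param hP.
have [e0 [e1 [g0 [g1 [ne ng eQ]]]]] := param hQ.
case: hS => hR hA hB.
have [r0 [r1 [s0 [s1 [nr ns eR]]]]] := param hR.
subst P Q R.
have hPf : Pf d a0 a1 b0 b1 e0 e1 g0 g1 = 0.
  case: hP => _ /= h _; rewrite /Pf; apply/eqP; rewrite subr_eq0; apply/eqP; exact: h.
have hQf : Qf d a0 a1 b0 b1 e0 e1 g0 g1 = 0.
  case: hQ => _ /= h _; rewrite /Qf; apply/eqP; rewrite subr_eq0; apply/eqP; exact: h.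
case: hK => nU nZ hKU hKZe hKZ.
have [l eU] := kumU_lin na nb ne ng hKU.
have [n eZ] := kumZ_lin hKZe hKZ.
case: hK' => nU' nZ' hKU' hKZe' hKZ'.
have [l' eU'] := kumU_lin nr ns ne ng hKU'.
have [n' eZ'] := kumZ_lin hKZe' hKZ'.
subst U U' Z Z'.
have G1 : nz2 (tf d (scale4 l (segre (b0, b1) (g0, g1))) (n * (a0 * e0), n * (a1 * e1))) ->
  pi1_is (scale4 l' (segre (s0, s1) (g0, g1)))
         (tf d (scale4 l (segre (b0, b1) (g0, g1))) (n * (a0 * e0), n * (a1 * e1))).
  have -> : tf d (scale4 l (segre (b0, b1) (g0, g1))) (n * (a0 * e0), n * (a1 * e1)) =
    (l * n * (a0 * b0 * (e0 * g0) - d * (a1 * b1) * (e1 * g1)),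
     l * n * (a0 * b1 * (e0 * g1) - a1 * b0 * (e1 * g0))).
    by rewrite /tf /=; congr pair; ring.
  move=> nt; have nB := nz2_scale nt.
  have hF2 : fac2_is (segre (r0, r1) (s0, s1))
     (a0 * b0 * (e0 * g0) - d * (a1 * b1) * (e1 * g1),
      a0 * b1 * (e0 * g1) - a1 * b0 * (e1 * g0)).
    by apply: (hB _ _ nB); rewrite /inL /=; left.
  move: (fac2_seg nr hF2) => /= hsB.
  rewrite /pi1_is /prop2 /=; split.
    by apply: (lin_eq (l' * g0 * (l * n)) hsB); ring.
  by apply: (lin_eq (l' * g1 * (l * n)) hsB); ring.
have G4 : nz2 (Fa d (scale4 l (segre (b0, b1) (g0, g1))) (n * (a0 * e0), n * (a1 * e1))) ->
  pi3_is (n' * (r0 * e0), n' * (r1 * e1))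
         (Fa d (scale4 l (segre (b0, b1) (g0, g1))) (n * (a0 * e0), n * (a1 * e1))).
  have -> : Fa d (scale4 l (segre (b0, b1) (g0, g1))) (n * (a0 * e0), n * (a1 * e1)) =
    (l ^+ 2 * n * (fw Fa d a0 a1 b0 b1 e0 e1 g0 g1).1,
     l ^+ 2 * n * (fw Fa d a0 a1 b0 b1 e0 e1 g0 g1).2).
    by rewrite /fw /Fa /=; congr pair; ring.
  move=> nF; have nf := nz2_scale nF.
  have key : r0 * (e0 * (fw Fa d a0 a1 b0 b1 e0 e1 g0 g1).2)
           = r1 * (e1 * (fw Fa d a0 a1 b0 b1 e0 e1 g0 g1).1).
    case: (nz2_dec (A0f d a0 a1 b0 b1 e0 e1 g0 g1) (A1f d a0 a1 b0 b1 e0 e1 g0 g1)) => [nA|[z0 z1]].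
      have hF1 : fac1_is (segre (r0, r1) (s0, s1))
         (A0f d a0 a1 b0 b1 e0 e1 g0 g1, A1f d a0 a1 b0 b1 e0 e1 g0 g1).
        by apply: (hA _ _ nA); rewrite /inL /=; left.
      move: (fac1_seg ns hF1) => /= hr.
      exact: (cancel_lem hr (Fa_A hPf hQf) nA).
    case: (nz2_dec (B0f d a0 a1 b0 b1 e0 e1 g0 g1) (B1f d a0 a1 b0 b1 e0 e1 g0 g1)) => [nA|[z2 z3]].
      have hF1 : fac1_is (segre (r0, r1) (s0, s1))
         (B0f d a0 a1 b0 b1 e0 e1 g0 g1, B1f d a0 a1 b0 b1 e0 e1 g0 g1).
        by apply: (hA _ _ nA); rewrite /inL /=; right; left.
      move: (fac1_seg ns hF1) => /= hr.
      exact: (cancel_lem hr (Fa_A2 hPf hQf) nA).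
    exfalso; apply: nf.
    have [h1 h2' h3 h4] := Fa_van0 hQf z0 z1 z2 z3.
    split; first exact: (van_lem ne h1 h2').
    apply: (van_lem _ h3 h4); apply: (nz2_m ne) => z.
    by rewrite mulf_neq0 // expf_neq0 // (e1_nz ne z).
  move: key; rewrite /fw /= => key; rewrite /pi3_is /prop2 /=.
  by apply: (lin_eq (n' * (l ^+ 2 * n)) key); ring.
have G5 : nz2 (Fb d (scale4 l (segre (b0, b1) (g0, g1))) (n * (a0 * e0), n * (a1 * e1))) ->
  pi3_is (n' * (r0 * e0), n' * (r1 * e1))
         (Fb d (scale4 l (segre (b0, b1) (g0, g1))) (n * (a0 * e0), n * (a1 * e1))).
  have -> : Fb d (scale4 l (segre (b0, b1) (g0, g1))) (n * (a0 * e0), n * (a1 * e1)) =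
    (l ^+ 2 * n * (fw Fb d a0 a1 b0 b1 e0 e1 g0 g1).1,
     l ^+ 2 * n * (fw Fb d a0 a1 b0 b1 e0 e1 g0 g1).2).
    by rewrite /fw /Fb /=; congr pair; ring.
  move=> nF; have nf := nz2_scale nF.
  have key : r0 * (e0 * (fw Fb d a0 a1 b0 b1 e0 e1 g0 g1).2)
           = r1 * (e1 * (fw Fb d a0 a1 b0 b1 e0 e1 g0 g1).1).
    case: (nz2_dec (A0f d a0 a1 b0 b1 e0 e1 g0 g1) (A1f d a0 a1 b0 b1 e0 e1 g0 g1)) => [nA|[z0 z1]].
      have hF1 : fac1_is (segre (r0, r1) (s0, s1))
         (A0f d a0 a1 b0 b1 e0 e1 g0 g1, A1f d a0 a1 b0 b1 e0 e1 g0 g1).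
        by apply: (hA _ _ nA); rewrite /inL /=; left.
      move: (fac1_seg ns hF1) => /= hr.
      exact: (cancel_lem hr (Fb_A hPf hQf) nA).
    case: (nz2_dec (B0f d a0 a1 b0 b1 e0 e1 g0 g1) (B1f d a0 a1 b0 b1 e0 e1 g0 g1)) => [nA|[z2 z3]].
      have hF1 : fac1_is (segre (r0, r1) (s0, s1))
         (B0f d a0 a1 b0 b1 e0 e1 g0 g1, B1f d a0 a1 b0 b1 e0 e1 g0 g1).
        by apply: (hA _ _ nA); rewrite /inL /=; right; left.
      move: (fac1_seg ns hF1) => /= hr.
      exact: (cancel_lem hr (Fb_A2 hPf hQf) nA).
    exfalso; apply: nf.
    have [h1 h2' h3 h4] := Fb_van0 hQf z0 z1 z2 z3.
    split; first exact: (van_lem ne h1 h2').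
    apply: (van_lem _ h3 h4); apply: (nz2_m ne) => z.
    rewrite !mulf_neq0 // ?expf_neq0 // ?(e1_nz ne z) //.
    exact: (g0_nz hd0 hQf z ne ng).
  move: key; rewrite /fw /= => key; rewrite /pi3_is /prop2 /=.
  by apply: (lin_eq (n' * (l ^+ 2 * n)) key); ring.
move=> U0 U1 U2 U3 Z0 Z1; rewrite /U0 /U1 /U2 /U3 /Z0 /Z1.
split; first exact: G1.
split; first by move=> _; rewrite /pi2_is /prop2 /=; split; ring.
split; first by move=> _; rewrite /pi2_is /prop2 /=; split; ring.
split; first exact: G4.
exact: G5.
Qed.
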